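(* Let $m\in\{1,2\}$ and $\gamma\in[2,3]$. Then for every $z\in[z_m,z_M)$, $C(V_1;\gamma,z,P_6)\ne C_1$; that is, the analytic connection from $P_1$ guaranteed by the existence of $z_{std}$ can only pass through $P_8$ (at $z=z_M$ the points $P_6$ and $P_8$ coincide).
   Context: Fix $m\in\{1,2\}$. For $z>0$ put $\lambda=1+m\gamma z$, $a_1=1+\frac{m(\gamma-1)}{2}$, $a_2=\frac{m(\gamma-1)+mz\gamma(\gamma-3)}{2}$, $a_3=\frac{mz\gamma(\gamma-1)}{2}$, $G(V,C;\gamma,z)=C^2[(m+1)V+2mz]-V(1+V)(\lambda+V)$, $F(V,C;\gamma,z)=C\{C^2[1+\frac{mz}{1+V}]-a_1(1+V)^2+a_2(1+V)-a_3\}$; ODE $\frac{dC}{dV}=\frac FG$. $V_1=-\frac2{\gamma+1}$, $C_1=\frac{\sqrt{2\gamma(\gamma-1)}}{\gamma+1}$. $z_M=(\sqrt\gamma+\sqrt2)^{-2}$, $z_m=\frac{\gamma-1}{(2\gamma-1)(\gamma+1)}$; $w(z)=\sqrt{1-2(\gamma+2)z+(\gamma-2)^2z^2}$, $V_6=\frac{-1+(\gamma-2)z-w}{2}$, $C_6=1+V_6$, $V_8=\frac{-1+(\gamma-2)z+w}{2}$, $C_8=1+V_8$, $P_6=(V_6,C_6)$, $P_8=(V_8,C_8)$. For $z\in[z_m,z_M]$, $C(\cdot;\gamma,z,P_6):[V_1,V_6]\to(0,\infty)$ is the real-analytic solution of the ODE near $V_6$ with $C(V_6)=C_6$ and $C'(V_6)$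 equal to the unique negative root of $-G_Cc^2+(F_C-G_V)c+F_V=0$ (partials at $P_6$), continued to $[V_1,V_6]$. *)

(* Defs.v *)
From Stdlib Require Import Reals Lra.
From Coquelicot Require Import Coquelicot.
Open Scope R_scope.

Section Defs.
Variables (m gamma z : R).

Definition lam : R := 1 + m * gamma * z.
Definition a1 : R := 1 + m * (gamma - 1) / 2.
Definition a2 : R := (m * (gamma - 1) + m * z * gamma * (gamma - 3)) / 2.
Definition a3 : R := m * z * gamma * (gamma - 1) / 2.

Definition Gf (V C : R) : R :=
  C ^ 2 * ((m + 1) * V + 2 * m * z) - V * (1 + V) * (lam + V).

Definition Ff (V C : R) : R :=
  C * (C ^ 2 * (1 + m * z / (1 + V)) - a1 * (1 + V) ^ 2 + a2 * (1 + V) - a3).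

Definition V1pt : R := - 2 / (gamma + 1).
Definition C1pt : R := sqrt (2 * gamma * (gamma - 1)) / (gamma + 1).

Definition zM : R := / (sqrt gamma + sqrt 2) ^ 2.
Definition zm : R := (gamma - 1) / ((2 * gamma - 1) * (gamma + 1)).

Definition wz : R := sqrt (1 - 2 * (gamma + 2) * z + (gamma - 2) ^ 2 * z ^ 2).
Definition V6pt : R := (-1 + (gamma - 2) * z - wz) / 2.
Definition C6pt : R := 1 + V6pt.
Definition V8pt : R := (-1 + (gamma - 2) * z + wz) / 2.
Definition C8pt : R := 1 + V8pt.

Definition G_V6 : R := Derive (fun V => Gf V C6pt) V6pt.
Definition G_C6 : R := Derive (fun C => Gf V6pt C) C6pt.
Definition F_V6 : R := Derive (fun V => Ff V C6pt) V6pt.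
Definition F_C6 : R := Derive (fun C => Ff V6pt C) C6pt.

(* c is the slope at P6 of the solution: negative root of the quadratic *)
Definition slope6 (c : R) : Prop :=
  c < 0 /\ - G_C6 * c ^ 2 + (F_C6 - G_V6) * c + F_V6 = 0.

Definition sol_P6 (C : R -> R) : Prop :=
  (exists r : R, 0 < r /\ exists a : nat -> R,
     forall V, Rabs (V - V6pt) < r -> is_pseries a (V - V6pt) (C V)) /\
  C V6pt = C6pt /\
  (exists c, slope6 c /\ is_derive C V6pt c) /\
  (forall V, V1pt < V < V6pt ->
     Gf V (C V) <> 0 /\ is_derive C V (Ff V (C V) / Gf V (C V))) /\
  filterlim C (at_right V1pt) (locally (C V1pt)) /\
  (forall V, V1pt <= V <= V6pt -> 0 < C V).

End Defs.

(* Main.v *)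
Require Import Defs.
From Stdlib Require Import Reals.
From Coquelicot Require Import Coquelicot.
Open Scope R_scope.
From Stdlib Require Import Lra Lia Psatz ZArith List.
Import ListNotations.
Open Scope R_scope.

Definition evalZ1 (p : list Z) (x : R) : R := fold_right (fun a r => IZR a + x * r) 0 p.
Definition evalZ2 (M : list (list Z)) (k t : R) : R :=
  fold_right (fun row r => evalZ1 row t + k * r) 0 M.

Lemma evalZ1_cons : forall a p x, evalZ1 (a :: p) x = IZR a + x * evalZ1 p x.
Proof. reflexivity. Qed.
Lemma evalZ1_nil : forall x, evalZ1 [] x = 0.
Proof. reflexivity. Qed.
Lemma evalZ2_cons : forall a M k t, evalZ2 (a :: M) k t = evalZ1 a t + k * evalZ2 M k t.
Proof. reflexivity. Qed.
Lemma evalZ2_nil : forall k t, evalZ2 [] k t = 0.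
Proof. reflexivity. Qed.

Fixpoint addZ1 (p q : list Z) : list Z :=
  match p, q with
  | [], _ => q
  | _, [] => p
  | a :: p', b :: q' => (a + b)%Z :: addZ1 p' q'
  end.
Fixpoint addZ2 (p q : list (list Z)) : list (list Z) :=
  match p, q with
  | [], _ => q
  | _, [] => p
  | a :: p', b :: q' => addZ1 a b :: addZ2 p' q'
  end.

Lemma evalZ1_add : forall p q x, evalZ1 (addZ1 p q) x = evalZ1 p x + evalZ1 q x.
Proof.
  induction p as [|a p IH]; intros q x. simpl; ring.
  destruct q as [|b q]. simpl; ring.
  simpl addZ1. rewrite !evalZ1_cons, IH, plus_IZR. ring.
Qed.
Lemma evalZ2_add : forall p q k t, evalZ2 (addZ2 p q) k t = evalZ2 p k t + evalZ2 q k t.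
Proof.
  induction p as [|a p IH]; intros q k t. simpl; ring.
  destruct q as [|b q]. simpl; ring.
  simpl addZ2. rewrite !evalZ2_cons, IH, evalZ1_add. ring.
Qed.

Fixpoint hl1 (n : nat) (p : list Z) : list Z :=
  match p with [] => [] | c :: p' => (c * 2 ^ Z.of_nat n)%Z :: hl1 (pred n) p' end.

Lemma IZR_pow2 : forall n, IZR (2 ^ Z.of_nat n) = 2 ^ n.
Proof. intros n. rewrite <- pow_IZR. reflexivity. Qed.

Lemma evalZ1_hl : forall p n x, (length p <= S n)%nat ->
  evalZ1 (hl1 n p) x = 2 ^ n * evalZ1 p (x / 2).
Proof.
  induction p as [|c p IH]; intros n x Hl. simpl; ring.
  simpl hl1. rewrite !evalZ1_cons, mult_IZR, IZR_pow2.
  destruct p as [|c' p'].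
  - simpl. ring.
  - simpl in Hl. destruct n as [|n']. lia.
    simpl pred. rewrite IH by (simpl; lia). simpl pow. field.
Qed.

Fixpoint hlK (n : nat) (M : list (list Z)) : list (list Z) :=
  match M with [] => [] | row :: M' => map (fun c => (c * 2 ^ Z.of_nat n)%Z) row :: hlK (pred n) M' end.

Lemma evalZ1_scale : forall p c x, evalZ1 (map (fun a => (a * c)%Z) p) x = IZR c * evalZ1 p x.
Proof.
  induction p as [|a p IH]; intros c x. simpl; ring.
  simpl map. rewrite !evalZ1_cons, IH, mult_IZR. ring.
Qed.

Lemma evalZ2_hlK : forall M n k t, (length M <= S n)%nat ->
  evalZ2 (hlK n M) k t = 2 ^ n * evalZ2 M (k / 2) t.
Proof.
  induction M as [|row M IH]; intros n k t Hl. simpl; ring.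
  simpl hlK. rewrite !evalZ2_cons, evalZ1_scale, IZR_pow2.
  destruct M as [|row' M'].
  - simpl. ring.
  - simpl in Hl. destruct n as [|n']. lia.
    simpl pred. rewrite IH by (simpl; lia). simpl pow. field.
Qed.

Definition hlT (n : nat) (M : list (list Z)) : list (list Z) := map (hl1 n) M.

Lemma evalZ2_hlT : forall M n k t, Forall (fun row => (length row <= S n)%nat) M ->
  evalZ2 (hlT n M) k t = 2 ^ n * evalZ2 M k (t / 2).
Proof.
  induction M as [|row M IH]; intros n k t Hl. simpl; ring.
  inversion Hl; subst.
  change (hlT n (row :: M)) with (hl1 n row :: hlT n M).
  rewrite !evalZ2_cons, IH, evalZ1_hl by assumption. ring.
Qed.

Definition sh1 (p : list Z) : list Z := fold_right (fun a r => addZ1 [a] (addZ1 r (0%Z :: r))) [] p.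
Lemma evalZ1_sh1 : forall p x, evalZ1 (sh1 p) x = evalZ1 p (1 + x).
Proof.
  induction p as [|a p IH]; intros x. simpl; ring.
  change (sh1 (a :: p)) with (addZ1 [a] (addZ1 (sh1 p) (0%Z :: sh1 p))).
  rewrite !evalZ1_add, !evalZ1_cons, evalZ1_nil, IH. simpl IZR. ring.
Qed.
Definition shK (M : list (list Z)) : list (list Z) :=
  fold_right (fun row R => addZ2 [row] (addZ2 R ([] :: R))) [] M.
Lemma evalZ2_shK : forall M k t, evalZ2 (shK M) k t = evalZ2 M (1 + k) t.
Proof.
  induction M as [|row M IH]; intros k t. simpl; ring.
  change (shK (row :: M)) with (addZ2 [row] (addZ2 (shK M) ([] :: shK M))).
  rewrite !evalZ2_add, !evalZ2_cons, evalZ2_nil, evalZ1_nil, IH. ring.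
Qed.
Definition shT (M : list (list Z)) : list (list Z) := map sh1 M.
Lemma evalZ2_shT : forall M k t, evalZ2 (shT M) k t = evalZ2 M k (1 + t).
Proof.
  induction M as [|row M IH]; intros k t. simpl; ring.
  change (shT (row :: M)) with (sh1 row :: shT M).
  rewrite !evalZ2_cons, IH, evalZ1_sh1. ring.
Qed.

(* rounding up after division by 2^r *)
Definition rnd (r : Z) (c : Z) : Z := (- Z.shiftr (- c) r)%Z.
Lemma rnd_ok : forall r c, (0 <= r)%Z -> IZR c <= IZR (2 ^ r) * IZR (rnd r c).
Proof.
  intros r c Hr. unfold rnd. rewrite Z.shiftr_div_pow2 by exact Hr.
  rewrite <- mult_IZR. apply IZR_le.
  assert (Hp : (0 < 2 ^ r)%Z) by (apply Z.pow_pos_nonneg; lia).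
  pose proof (Z.mul_div_le (- c) (2 ^ r) Hp). lia.
Qed.
Definition roundM (r : Z) (M : list (list Z)) : list (list Z) := map (map (rnd r)) M.

Lemma evalZ1_round : forall p r x, (0 <= r)%Z -> 0 <= x ->
  evalZ1 p x <= IZR (2 ^ r) * evalZ1 (map (rnd r) p) x.
Proof.
  induction p as [|a p IH]; intros r x Hr Hx. simpl; lra.
  simpl map. rewrite !evalZ1_cons.
  pose proof (rnd_ok r a Hr). pose proof (IH r x Hr Hx).
  assert (x * evalZ1 p x <= x * (IZR (2 ^ r) * evalZ1 (map (rnd r) p) x)) by (apply Rmult_le_compat_l; lra).
  lra.
Qed.
Lemma evalZ2_round : forall M r k t, (0 <= r)%Z -> 0 <= k -> 0 <= t ->
  evalZ2 M k t <= IZR (2 ^ r) * evalZ2 (roundM r M) k t.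
Proof.
  induction M as [|row M IH]; intros r k t Hr Hk Ht. simpl; lra.
  change (roundM r (row :: M)) with (map (rnd r) row :: roundM r M).
  rewrite !evalZ2_cons.
  pose proof (evalZ1_round row r t Hr Ht). pose proof (IH r k t Hr Hk Ht).
  assert (k * evalZ2 M k t <= k * (IZR (2 ^ r) * evalZ2 (roundM r M) k t)) by (apply Rmult_le_compat_l; lra).
  lra.
Qed.

Definition maxabs (M : list (list Z)) : Z :=
  fold_right (fun row m => fold_right (fun c m' => Z.max (Z.abs c) m') m row) 0%Z M.
Definition rbits (M : list (list Z)) : Z := Z.max 0 (Z.log2 (maxabs M) - 62).
Definition rM (M : list (list Z)) : list (list Z) := roundM (rbits M) M.

Lemma rbits_nonneg : forall M, (0 <= rbits M)%Z.
Proof. intros; unfold rbits; lia. Qed.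

Lemma evalZ2_rM_neg : forall M k t, 0 <= k -> 0 <= t -> evalZ2 (rM M) k t < 0 -> evalZ2 M k t < 0.
Proof.
  intros M k t Hk Ht H. pose proof (evalZ2_round M (rbits M) k t (rbits_nonneg M) Hk Ht).
  assert (0 < IZR (2 ^ rbits M)) by (apply IZR_lt; apply Z.pow_pos_nonneg; [lia|apply rbits_nonneg]).
  unfold rM in H. nra.
Qed.

Definition nkM (M : list (list Z)) : nat := pred (length M).
Definition ntM (M : list (list Z)) : nat := pred (fold_right (fun row m => Nat.max (length row) m) 0%nat M).

Lemma nkM_ok : forall M, (length M <= S (nkM M))%nat.
Proof. intros; unfold nkM; destruct (length M); simpl; lia. Qed.
Lemma ntM_ok : forall M, Forall (fun row => (length row <= S (ntM M))%nat) M.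
Proof.
  intros M. unfold ntM.
  assert (H : forall N : list (list Z), Forall (fun row => (length row <= fold_right (fun row m => Nat.max (length row) m) 0%nat N)%nat) N).
  { induction N as [|row N IH]; constructor.
    - simpl. apply Nat.le_max_l.
    - eapply Forall_impl; [|exact IH]. intros a Ha. simpl. eapply Nat.le_trans; [exact Ha|apply Nat.le_max_r]. }
  eapply Forall_impl; [|apply H]. intros a Ha.
  destruct (fold_right (fun row m => Nat.max (length row) m) 0%nat M); simpl; lia.
Qed.

Definition leftK (M : list (list Z)) := rM (hlK (nkM M) M).
Definition rightK (M : list (list Z)) := rM (shK (hlK (nkM M) M)).
Definition leftT (M : list (list Z)) := rM (hlT (ntM M) M).
Definition rightT (M : list (list Z)) := rM (shT (hlT (ntM M) M)).

Lemma leftK_ok : forall M k t, 0 <= k <= 1/2 -> 0 <= t -> evalZ2 (leftK M) (2 * k) t < 0 -> evalZ2 M k t < 0.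
Proof.
  intros M k t Hk Ht H. unfold leftK in H. apply evalZ2_rM_neg in H; [|lra|lra].
  rewrite evalZ2_hlK in H by apply nkM_ok.
  replace (2 * k / 2) with k in H by field.
  pose proof (pow_lt 2 (nkM M) ltac:(lra)). nra.
Qed.
Lemma rightK_ok : forall M k t, 1/2 <= k -> 0 <= t -> evalZ2 (rightK M) (2 * k - 1) t < 0 -> evalZ2 M k t < 0.
Proof.
  intros M k t Hk Ht H. unfold rightK in H. apply evalZ2_rM_neg in H; [|lra|lra].
  rewrite evalZ2_shK, evalZ2_hlK in H by apply nkM_ok.
  replace ((1 + (2 * k - 1)) / 2) with k in H by field.
  pose proof (pow_lt 2 (nkM M) ltac:(lra)). nra.
Qed.
Lemma leftT_ok : forall M k t, 0 <= k -> 0 <= t <= 1/2 -> evalZ2 (leftT M) k (2 * t) < 0 -> evalZ2 M k t < 0.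
Proof.
  intros M k t Hk Ht H. unfold leftT in H. apply evalZ2_rM_neg in H; [|lra|lra].
  rewrite evalZ2_hlT in H by apply ntM_ok.
  replace (2 * t / 2) with t in H by field.
  pose proof (pow_lt 2 (ntM M) ltac:(lra)). nra.
Qed.
Lemma rightT_ok : forall M k t, 0 <= k -> 1/2 <= t -> evalZ2 (rightT M) k (2 * t - 1) < 0 -> evalZ2 M k t < 0.
Proof.
  intros M k t Hk Ht H. unfold rightT in H. apply evalZ2_rM_neg in H; [|lra|lra].
  rewrite evalZ2_shT, evalZ2_hlT in H by apply ntM_ok.
  replace ((1 + (2 * t - 1)) / 2) with t in H by field.
  pose proof (pow_lt 2 (ntM M) ltac:(lra)). nra.
Qed.

Definition bpos1 (p : list Z) : Z := fold_right (fun a r => (Z.max a 0 + r)%Z) 0%Z p.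
Definition bfirst1 (p : list Z) : Z := match p with [] => 0%Z | a :: r => (a + bpos1 r)%Z end.
Definition bpos2 (M : list (list Z)) : Z := fold_right (fun row r => (bpos1 row + r)%Z) 0%Z M.
Definition bnd (M : list (list Z)) : Z := match M with [] => 0%Z | row :: R => (bfirst1 row + bpos2 R)%Z end.

Lemma bpos1_ok : forall p x, 0 <= x <= 1 -> evalZ1 p x <= IZR (bpos1 p) /\ 0 <= IZR (bpos1 p).
Proof.
  induction p as [|a p IH]; intros x Hx. simpl; lra.
  rewrite evalZ1_cons. simpl bpos1. rewrite plus_IZR.
  destruct (IH x Hx) as [H1 H2].
  assert (Ha : IZR a <= IZR (Z.max a 0) /\ 0 <= IZR (Z.max a 0)) by (split; apply IZR_le; lia).
  assert (x * evalZ1 p x <= IZR (bpos1 p)) by nra. lra.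
Qed.
Lemma bpos2_ok : forall M k t, 0 <= k <= 1 -> 0 <= t <= 1 -> evalZ2 M k t <= IZR (bpos2 M) /\ 0 <= IZR (bpos2 M).
Proof.
  induction M as [|row M IH]; intros k t Hk Ht. simpl; lra.
  rewrite evalZ2_cons. simpl bpos2. rewrite plus_IZR.
  destruct (IH k t Hk Ht) as [H1 H2]. destruct (bpos1_ok row t Ht) as [H3 H4].
  assert (k * evalZ2 M k t <= IZR (bpos2 M)) by nra. lra.
Qed.
Lemma bnd_ok : forall M k t, 0 <= k <= 1 -> 0 <= t <= 1 -> evalZ2 M k t <= IZR (bnd M).
Proof.
  intros [|row M] k t Hk Ht. simpl; lra.
  rewrite evalZ2_cons. simpl bnd. rewrite plus_IZR.
  destruct (bpos2_ok M k t Hk Ht) as [H1 H2].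
  assert (Hr : evalZ1 row t <= IZR (bfirst1 row)).
  { destruct row as [|a r]. simpl; lra. rewrite evalZ1_cons. simpl bfirst1. rewrite plus_IZR.
    destruct (bpos1_ok r t Ht) as [H3 H4]. assert (t * evalZ1 r t <= IZR (bpos1 r)) by nra. lra. }
  assert (k * evalZ2 M k t <= IZR (bpos2 M)) by nra. lra.
Qed.

Inductive tree := Leaf (i : nat) | SK (l r : tree) | ST (l r : tree).

Fixpoint check (Ms : list (list (list Z))) (tr : tree) : bool :=
  match tr with
  | Leaf i => Z.ltb (bnd (nth i Ms [])) 0
  | SK l r => check (map leftK Ms) l && check (map rightK Ms) r
  | ST l r => check (map leftT Ms) l && check (map rightT Ms) r
  end.

Lemma nth_map_nil : forall (f : list (list Z) -> list (list Z)) Ms i, f [] = [] -> nth i (map f Ms) [] = f (nth i Ms []).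
Proof. intros f Ms i Hf. rewrite <- Hf at 1. apply map_nth. Qed.

Lemma check_ok : forall tr Ms, check Ms tr = true ->
  forall k t, 0 <= k <= 1 -> 0 <= t <= 1 -> exists i, evalZ2 (nth i Ms []) k t < 0.
Proof.
  induction tr as [i|l IHl r IHr|l IHl r IHr]; intros Ms Hc k t Hk Ht; simpl in Hc.
  - exists i. apply Z.ltb_lt in Hc. apply IZR_lt in Hc. pose proof (bnd_ok (nth i Ms []) k t Hk Ht). lra.
  - apply andb_prop in Hc as [Hl Hr].
    destruct (Rle_lt_dec k (1/2)).
    + destruct (IHl _ Hl (2*k) t ltac:(lra) Ht) as [i Hi]. exists i.
      rewrite nth_map_nil in Hi by reflexivity. apply leftK_ok in Hi; lra.
    + destruct (IHr _ Hr (2*k-1) t ltac:(lra) Ht) as [i Hi]. exists i.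
      rewrite nth_map_nil in Hi by reflexivity. apply rightK_ok in Hi; lra.
  - apply andb_prop in Hc as [Hl Hr].
    destruct (Rle_lt_dec t (1/2)).
    + destruct (IHl _ Hl k (2*t) Hk ltac:(lra)) as [i Hi]. exists i.
      rewrite nth_map_nil in Hi by reflexivity. apply leftT_ok in Hi; lra.
    + destruct (IHr _ Hr k (2*t-1) Hk ltac:(lra)) as [i Hi]. exists i.
      rewrite nth_map_nil in Hi by reflexivity. apply rightT_ok in Hi; lra.
Qed.

Lemma check3_ok : forall A B C tr, check [A; B; C] tr = true ->
  forall k t, 0 <= k <= 1 -> 0 <= t <= 1 ->
  0 <= evalZ2 B k t -> 0 <= evalZ2 C k t -> evalZ2 A k t < 0.
Proof.
  intros A B C tr Hc k t Hk Ht HB HC.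
  destruct (check_ok tr _ Hc k t Hk Ht) as [i Hi].
  destruct i as [|[|[|i]]]; simpl in Hi; try lra.
  destruct i; simpl in Hi; lra.
Qed.

Definition sK (k : R) := (-79 + 32*k)/16.
Definition V1K (k : R) := -(k^2-2)/(k^2-1).
Definition LK (k V : R) := k/(k^2-1) - 1/1000 + sK k * (V - V1K k).
Definition gK (k : R) := k^2/(k^2-2).
Definition zmK (k : R) := (k^2-2)/((k^2+2)*(k^2-1)).
Definition zhK (k : R) := (3*k^2-4)*(k^2-2)/(17*k^4-40*k^2+16).
Definition kap (k : R) := (k - 173/100) * (100/27).
Definition tau (V : R) := (V + 7/10) * (10/3).

Definition R1Z : list (list Z) := ([[(-40213);(59787)];
 [(28026);(28026)];
 [(2187);(2187)]])%Z.
Definition R2Z : list (list Z) := ([[(12219155779);(-14568197091)];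
 [(10624675284);(-17308465236)];
 [(2487279474);(-5801581746)];
 [(258792084);(-694652436)];
 [(10097379);(-27103491)]])%Z.
Lemma R1_br : forall k V, evalZ2 R1Z (kap k) (tau V) = IZR 100000 * ((k^2-2) + V*(k^2-1)).
Proof. intros k V. unfold kap, tau, evalZ2, evalZ1, R1Z. cbn [fold_right]. field. Qed.
Lemma R2_br : forall k V, evalZ2 R2Z (kap k) (tau V) = IZR 1000000000 * (-2*(5*k^4-14*k^2+8) - V*(17*k^4-40*k^2+16)).
Proof. intros k V. unfold kap, tau, evalZ2, evalZ1, R2Z. cbn [fold_right]. field. Qed.
Definition Phi1mZ : list (list Z) := ([[(-48315451524313463166995192266667752592033);(-1337709285236762434984325393315838067308);(131431637680471682964782871818348548738674);(-102915792903618302018211856942198437817692);(18971883976522297514489032937323833568359)];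
 [(-137654036623561013077876679242782074322378);(-150178029399962033420918270581358719896);(345773752360370640237348381548018881001556);(-269072666280262559904440703809978983320504);(52764685851943042441661462177609264080422)];
 [(-123805816735335492538692166989684875967099);(42666600681758091642472882312377919668828);(314539948764267234227885432300214918157254);(-249053151257336749719444097326427241579124);(53049136300578187487609765976022325499549)];
 [(-978273353470175032646059616499171212268);(55031224941395042012363223098993725570512);(80953450697621805992186494863081808351800);(-76005241552530075498781718360282348199600);(18285953350525178090360522568599908231380)];
 [(55707031465984297356831967535563800456567);(-11369822325126465284137232738390219580108);(-48590870206316033556417049179753510172350);(22172662657344467632424262398909261191620);(-5674147052987669661141581729524176672705)];
 [(25178233678697871534660197779780497179226);(-41064054984934288288139363109908871539304);(-44071794389701095473012039960627646070452);(18561991294296600384434456740988418369336);(-6370005726440907244233909682464139478742)];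
 [(3562647267652969274163955108475701740261);(-17316254789701686688896642820564172386980);(-19260470788841563199279337860884583044218);(196257396703070780975853577021682497932);(-1358518743142137336006474771040194185091)];
 [(1800079744327438815898024794385432589424);(-2223575764699438884131746936632081878112);(-7598829620389607632722048742935353149632);(-3239149666949589864758230795968701677728);(356459176530792036359772494911261804368)];
 [(857150341850106952889262616456115133861);(106431522823088022460932216309675707676);(-2316486921573533563862011514816684667450);(-1337902699608397054762516356881580098100);(227729342746868636141347438864537143165)];
 [(242466251412312343380347131652458859466);(219684020861198152877050807888242715416);(-294744104157912223809361809037496850900);(-239020220062939284216915602808174173640);(32891752143641322648665335397074533210)];
 [(64194288494255437245247046206456520247);(133209467303023995559763815998766182132);(66592931284923182338378965635416094082);(-7861997293472032269980538721851673596);(-5439789860300292419277115747588505793)];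
 [(15998589840452534856134925368878570212);(43877615180471251430415686610739418448);(36777969887623543160792133099356132568);(5819713250855470506665651354436276048);(-3079231307496612269943807963846208284)];
 [(2954069518745661843606140951744378949);(8585922291506405483801217021368582940);(7706946909815018297992081840500477702);(1460446616467130557722728818037735628);(-614647520588104705740177747212938083)];
 [(364774726810044767261939106160423782);(1059101851659510222154142579440398312);(951648081759735899552637212918430900);(184767736198361108344141239596176200);(-72553220711909336316292500042280170)];
 [(29200459001901562049611254259055967);(83758741431520585156518696616036692);(74429713713720555113542850091539250);(14384869099721022996862851688738020);(-5486562184380509009772556045820505)];
 [(1457088861959740280858527574521560);(4136533000993529922855567767100480);(3639219747972096599723645767995696);(697195918113442968004295727197952);(-262579690824863989722309848218824)];
 [(41240884687497301948359638633280);(116451002170138214090397251996928);(101900347110036866010524916841344);(19411226459648297543296632225024);(-7279003167747656325190671252672)];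
 [(506135310874460679545156030976);(1429087936586712506951028793344);(1250451944513373443582150194176);(238181322764452084491838132224);(-89317996036669531684439299584)]])%Z.
Definition Phi1mT : tree := (SK (ST (SK (ST (Leaf 0) (Leaf 0)) (ST (Leaf 0) (Leaf 0))) (SK (ST (SK (Leaf 0) (Leaf 0)) (SK (ST (Leaf 0) (Leaf 2)) (ST (Leaf 0) (Leaf 2)))) (ST (SK (Leaf 0) (Leaf 0)) (SK (ST (Leaf 0) (Leaf 2)) (ST (Leaf 0) (Leaf 2)))))) (ST (SK (ST (Leaf 0) (Leaf 0)) (ST (Leaf 0) (Leaf 0))) (SK (ST (SK (Leaf 0) (Leaf 0)) (Leaf 2)) (ST (SK (Leaf 0) (Leaf 0)) (Leaf 2))))).
Lemma Phi1m_chk : check [Phi1mZ; R1Z; R2Z] Phi1mT = true.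
Proof. vm_compute. reflexivity. Qed.
Lemma Phi1m_br : forall k V, k^2 - 1 <> 0 -> k^2-2 <> 0 -> 17*k^4-40*k^2+16 <> 0 -> k^2+2 <> 0 -> 1 + V <> 0 ->
  (1+V) * (Ff 1 (gK k) (zmK k) V (LK k V) - sK k * Gf 1 (gK k) (zmK k) V (LK k V)) * ((k^2-1)^3*(k^2-2)^2*((k^2+2)*(k^2-1))) * IZR 6400000000000000000000000000000000000000 = evalZ2 Phi1mZ (kap k) (tau V).
Proof. intros k V H1 H2 H3 H4 H5. unfold Ff, Gf, lam, a1, a2, a3, LK, V1K, gK, zmK, sK, kap, tau, evalZ2, evalZ1, Phi1mZ. cbn [fold_right]. field; auto. Qed.
Definition G1mZ : list (list Z) := ([[(-472021600562619295431351772847);(687376203213727017028032405957);(-274261934238788782607095484073);(28528857232412954784645240963)];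
 [(-539554853483052435117750716874);(1014716282475034139608626047406);(-441860782280292087269347917126);(45251145505453781061705640194)];
 [(-136042650449459559403112072547);(458791028794923132021484175649);(-197456904508866207343486958421);(11119186634104912935032826183)];
 [(-28405076302747461143810202120);(97398017805068245175025743640);(2366870433957015458264512200);(-16325338454190994958059734360)];
 [(-15012205579635613179361162830);(17985919791099653678529642330);(23695174804202335426502711070);(-12517590248757700888595727690)];
 [(-5660233419382258311602052156);(2630540768855097527345850516);(6934860005258422600726920156);(-3177105912525691941914990196)];
 [(-1350651397913643558111556302);(-481316777334299368167296742);(906184361290298478342888222);(-46246116739700113498924938)];
 [(-334225744242491807699408856);(-452078934148686597074432568);(31282052774743706271610392);(155894111644521362786813304)];
 [(-74225401359564977991557955);(-123092270231880733855294815);(-8948026558507799123356725);(40380398007579653652892935)];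
 [(-10499937252718118747615370);(-17292934134662055943974930);(-1620900632794615045659270);(5172342379034225579101890)];
 [(-844459864086498667741647);(-1350055789293601161451323);(-126546293524313495461833);(379049664625370133391683)];
 [(-35457289302934293684624);(-55726068853441054984464);(-5069596401791442310896);(15199183148715318988944)];
 [(-605181569517500455872);(-950999609241786430656);(-86454509931071493696);(259363529793214481088)]])%Z.
Definition G1mT : tree := (SK (ST (SK (ST (Leaf 0) (Leaf 0)) (ST (Leaf 0) (Leaf 0))) (SK (ST (Leaf 0) (SK (Leaf 0) (ST (Leaf 0) (Leaf 2)))) (ST (Leaf 0) (SK (ST (Leaf 0) (Leaf 2)) (ST (SK (Leaf 0) (Leaf 2)) (Leaf 2)))))) (ST (SK (ST (Leaf 0) (Leaf 0)) (ST (Leaf 0) (Leaf 0))) (SK (ST (SK (Leaf 0) (ST (Leaf 0) (Leaf 0))) (Leaf 2)) (ST (SK (ST (Leaf 0) (SK (Leaf 0) (ST (Leaf 0) (SK (Leaf 0) (Leaf 2))))) (ST (Leaf 0) (SK (ST (Leaf 0) (Leaf 2)) (ST (Leaf 0) (Leaf 2))))) (Leaf 2))))).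
Lemma G1m_chk : check [G1mZ; R1Z; R2Z] G1mT = true.
Proof. vm_compute. reflexivity. Qed.
Lemma G1m_br : forall k V, k^2 - 1 <> 0 -> k^2-2 <> 0 -> 17*k^4-40*k^2+16 <> 0 -> k^2+2 <> 0 -> 1 + V <> 0 ->
  Gf 1 (gK k) (zmK k) V (LK k V) * ((k^2-1)^2*(k^2-2)*((k^2+2)*(k^2-1))) * IZR 8000000000000000000000000000 = evalZ2 G1mZ (kap k) (tau V).
Proof. intros k V H1 H2 H3 H4 H5. unfold Ff, Gf, lam, a1, a2, a3, LK, V1K, gK, zmK, sK, kap, tau, evalZ2, evalZ1, G1mZ. cbn [fold_right]. field; auto. Qed.
Definition Phi1hZ : list (list Z) := ([[(-225999465630677609875764947438035837324291);(-14972163954617880479526612952285148418186);(643326117516113059681843808377517468167548);(-502425557618597063558939080784457787857174);(92588412658578807091215346786607708192103)];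
 [(-750875415796135115353708488867903921147006);(-43699026614534196602263075338971564225412);(2037086439234173986992578222879005707391992);(-1580842204240458434041545969969342092604348);(306785581449743833288428899579012749167174)];
 [(-799548877516976943545426285613716216351073);(87354472538231407231930733914171366554546);(2401165913821806478413903874108508092483188);(-1870162508330949416479254486373133395209618);(387640874506835252783860210023776824392333)];
 [(-56328967276095392021040172796953468087236);(196566927529628576244161107578652047414504);(1109505757674586626527654886689435012002800);(-908927048173476525357497916902788938839400);(205679505990490913842628000318691846533460)];
 [(444895005226742462544678961046534699718309);(-49572432494203510446241022884418599970586);(-109862133024178255755934689600225201113700);(-509517355381663837302572597532476229510);(900996150448668602184986420263631514015)];
 [(280798225313013060555482714606036371672302);(-267777083030051852167509272325185947715868);(-348281668678080695820281452564860358339704);(163947671685158355851323412818803420851292);(-50252586289001190487839898720399150978614)];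
 [(60009152862487648122085007619142908420447);(-174742789183255387518915698088595867469070);(-189605223137587504163935618065634551420876);(34572041672670966721948118443598310533934);(-20044357718240536572801880092843327746547)];
 [(12160961545593801183528656042778943197648);(-42436346662904942020149234234480788244864);(-77248609653035731332584633967063224793504);(-21995654292205036414393040282094575757696);(331844766004149935742311961888175874256)];
 [(6615534250234229014985437600327761431247);(-4020189571035210699976479381527674817358);(-26796568675132009449557493774010418328300);(-13973576442610341428374520769532622716050);(2257782765250654975012721373498483983805)];
 [(2209685062751578009243115086042699203582);(727209227017060893588580984632421165572);(-5289613101077579292842091416670385159800);(-3236890458564484989794775066932004099780);(574086116299450885534182153032747664570)];
 [(596613497193336142567507964851850408469);(1001791674719681478121687091546589283494);(165668170329725502131022085026191575164);(-245906700037057530246512530409128309062);(-6566502467950032074428681596116258481)];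
 [(167175396348562515892955757606379377324);(448586660952913526609787989675457467976);(364184629403874499936148722084003691376);(49860790148740463342964865396561649976);(-32923600498639874037669339805603740828)];
 [(35875310853582306917097098231237193423);(104664671052227845148100537276744677490);(93661373990279127891355949414610245844);(16608950179359195980343547009360764846);(-8263072410229760666439182726937297411)];
 [(4943307960140251620518733080541756114);(14355706254824201045548508801546264604);(12793214873255282295697127610262251000);(2286589932019861781384506076506433700);(-1094226648904588211496551106739162890)];
 [(423127239130072889678211027079472109);(1208502554106053208382544596353529014);(1059151431382909119364458606148705500);(185301011214614268218219820788581290);(-88475105192524616901037719815748585)];
 [(21882165888285026065417436811776520);(61715189258646882542751682096612560);(53389863644407411830549808064092992);(9162822646265530947771865182256944);(-4394017627780024405443697597000008)];
 [(628310521466523043298088899751360);(1761307968773010896636796657392256);(1513941319294742505851085204235008);(257200818136544494984136035298688);(-123743053851710157528241411295424)];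
 [(7711120324499136235423259530752);(21614955040874026667634310499328);(18578143175627262590363374313472);(3155902526628990119516855251968);(-1518405932623382038635468092928)]])%Z.
Definition Phi1hT : tree := (SK (ST (SK (ST (Leaf 0) (Leaf 0)) (ST (Leaf 0) (Leaf 0))) (SK (ST (SK (Leaf 0) (Leaf 0)) (SK (ST (Leaf 0) (Leaf 2)) (ST (Leaf 0) (Leaf 2)))) (ST (SK (Leaf 0) (Leaf 0)) (SK (ST (Leaf 0) (Leaf 2)) (ST (SK (Leaf 0) (Leaf 2)) (Leaf 2)))))) (ST (SK (ST (Leaf 0) (Leaf 0)) (ST (Leaf 0) (Leaf 0))) (SK (ST (SK (ST (Leaf 0) (Leaf 0)) (ST (Leaf 0) (Leaf 0))) (Leaf 2)) (ST (SK (ST (Leaf 0) (SK (ST (Leaf 0) (SK (Leaf 0) (ST (Leaf 0) (Leaf 2)))) (ST (Leaf 0) (SK (ST (Leaf 0) (Leaf 2)) (Leaf 2))))) (ST (Leaf 0) (SK (ST (Leaf 0) (Leaf 2)) (ST (SK (Leaf 0) (ST (Leaf 0) (SK (ST (Leaf 0) (Leaf 2)) (ST (Leaf 0) (Leaf 2))))) (Leaf 2))))) (Leaf 2))))).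
Lemma Phi1h_chk : check [Phi1hZ; R1Z; R2Z] Phi1hT = true.
Proof. vm_compute. reflexivity. Qed.
Lemma Phi1h_br : forall k V, k^2 - 1 <> 0 -> k^2-2 <> 0 -> 17*k^4-40*k^2+16 <> 0 -> k^2+2 <> 0 -> 1 + V <> 0 ->
  (1+V) * (Ff 1 (gK k) (zhK k) V (LK k V) - sK k * Gf 1 (gK k) (zhK k) V (LK k V)) * ((k^2-1)^3*(k^2-2)^2*(17*k^4-40*k^2+16)) * IZR 6400000000000000000000000000000000000000 = evalZ2 Phi1hZ (kap k) (tau V).
Proof. intros k V H1 H2 H3 H4 H5. unfold Ff, Gf, lam, a1, a2, a3, LK, V1K, gK, zhK, sK, kap, tau, evalZ2, evalZ1, Phi1hZ. cbn [fold_right]. field; auto. Qed.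
Definition G1hZ : list (list Z) := ([[(-2293284067522885995299884744769);(3349346460820607500148766873009);(-1338104484558421231655485729611);(139229272611044565482923306371)];
 [(-3820302045697839960605832817398);(6717375784752246810145928972502);(-2867310374251831710381098429202);(294940922244892359155068283298)];
 [(-1745108047749891921985986756669);(4516227226185647002905621786093);(-1987448093263608546815803671327);(159309440683356686184148245111)];
 [(-173264273608670700395749221240);(1224373848953385632075557575480);(-330086518443511704219633676200);(-67971632120033142298848684120)];
 [(-75602729457926431750170067410);(203005440345548552426582604210);(171369640535526608890533271290);(-105006354944063876119286270730)];
 [(-44369165295172616012437097412);(49506311296561740771279769092);(78888625317474032477166220692);(-40843000837651044487738753332)];
 [(-10500658762702744584259141554);(3797436723935529364041322386);(11193807596303732501693090394);(-4456274142270503738837123946)];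
 [(-2883611505948341647198278312);(-3572799129934697209242245976);(542139150399480568028149704);(1325849825583063488338626168)];
 [(-787536502047973763519178285);(-1272038783555798766975473955);(31664326603258816848155025);(522628374267269825991629895)];
 [(-124848541586120845531383990);(-192513925071432832363042410);(10975630508223881553851310);(78644459811924516383132130)];
 [(-10553646768957650905812369);(-15443668120354728203671551);(1351027956570133598745669);(6241049769163346788618611)];
 [(-450814106851593162561648);(-643391527723054914769488);(65808692656698670604208);(258386113528160422812048)];
 [(-7694451383865362938944);(-10979722761246079699392);(1123908629103929418048);(4409180006484646178496)]])%Z.
Definition G1hT : tree := (SK (ST (SK (ST (Leaf 0) (Leaf 0)) (ST (Leaf 0) (Leaf 0))) (SK (ST (Leaf 0) (SK (ST (Leaf 0) (Leaf 0)) (ST (Leaf 0) (Leaf 2)))) (ST (SK (Leaf 0) (Leaf 0)) (SK (ST (Leaf 0) (Leaf 2)) (ST (SK (Leaf 0) (Leaf 2)) (Leaf 2)))))) (ST (SK (ST (Leaf 0) (Leaf 0)) (ST (Leaf 0) (Leaf 0))) (SK (ST (SK (ST (Leaf 0) (Leaf 0)) (ST (Leaf 0) (Leaf 0))) (Leaf 2)) (ST (SK (ST (Leaf 0) (SK (ST (Leaf 0) (SK (Leaf 0) (ST (Leaf 0) (Leaf 2)))) (ST (Leaf 0) (SK (ST (Leaf 0) (Leaf 2)) (Leaf 2))))) (ST (Leaf 0) (SK (ST (Leaf 0) (Leaf 2)) (ST (SK (Leaf 0) (ST (Leaf 0) (SK (ST (Leaf 0) (Leaf 2)) (ST (Leaf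 0) (Leaf 2))))) (Leaf 2))))) (Leaf 2))))).
Lemma G1h_chk : check [G1hZ; R1Z; R2Z] G1hT = true.
Proof. vm_compute. reflexivity. Qed.
Lemma G1h_br : forall k V, k^2 - 1 <> 0 -> k^2-2 <> 0 -> 17*k^4-40*k^2+16 <> 0 -> k^2+2 <> 0 -> 1 + V <> 0 ->
  Gf 1 (gK k) (zhK k) V (LK k V) * ((k^2-1)^2*(k^2-2)*(17*k^4-40*k^2+16)) * IZR 8000000000000000000000000000 = evalZ2 G1hZ (kap k) (tau V).
Proof. intros k V H1 H2 H3 H4 H5. unfold Ff, Gf, lam, a1, a2, a3, LK, V1K, gK, zhK, sK, kap, tau, evalZ2, evalZ1, G1hZ. cbn [fold_right]. field; auto. Qed.
Definition Phi2mZ : list (list Z) := ([[(-60690645547370728279226988076756078332002);(-1872271293282829001734227117807861336039);(142232930537170498154507758695117950836143);(-103955132061930685373968864151025338191461);(18971883976522297514489032937323833568359)];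
 [(-136833915316162761950017077928337281994340);(5745073133742544512641761728897570411690);(350928877318275782566906012418292296666118);(-268992671178101672993086151624739704459490);(52764685851943042441661462177609264080422)];
 [(-102953551397918212184518322996766616137510);(43675209321294855459256584263355957321267);(297324531589043440679714379272229142869189);(-246424911734680026730225008312472794690039);(53049136300578187487609765976022325499549)];
 [(-7114431943659323696648331432148834000104);(44728922376207412988711409435628792151676);(76671205344943195480037554072866060595140);(-76121342930210205651281117302782825325260);(18285953350525178090360522568599908231380)];
 [(33563121570032668004021785161886439054766);(-10359860796923243290946876217451188760479);(-28739074284899407053107330744166728643225);(18870587154606242789733441939879650499315);(-5674147052987669661141581729524176672705)];
 [(16486956630060095740532799549844115061732);(-30532454385959806013142062185243507489242);(-25958630023004956126206780227484234914454);(17452278013380481662115017319530083357778);(-6370005726440907244233909682464139478742)];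
 [(2113199846976004950090050536610088860346);(-12262599812767159668578189326934292994509);(-11184031001451475700475658163899305638139);(1769594786481666935387175208511467631625);(-1358518743142137336006474771040194185091)];
 [(1219362475577942053785836338088265295056);(-1415408380071078412811112459012970392960);(-4712495680848931467194496126813497155872);(-1741700380786770932663501113763124463488);(356459176530792036359772494911261804368)];
 [(621623482324771134549601166782924655658);(136651843530496919026352562262718781123);(-1508331251734649781675940907632616045355);(-795494210002257987481527545323745027655);(227729342746868636141347438864537143165)];
 [(176152302429010808952017975839924136868);(160312108341671331364564348123371479958);(-204810046741453830358017459594856810950);(-156028199110255603681413949413197620830);(32891752143641322648665335397074533210)];
 [(45523495432978227421273522196162368542);(90957774579723492421604568007858492401);(38570448885214199686876024907907981879);(-12303580031157721607297755468746247773);(-5439789860300292419277115747588505793)];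
 [(11211184586111473143770863896734133528);(29796032715647382448656482549004107148);(22953409288973887325943685182125051124);(1289329862688621941212346026796069220);(-3079231307496612269943807963846208284)];
 [(2070655554745376717121648300225828618);(5852195497189670819030307656012150019);(4886746123290634571920180836130078677);(490558660259196369937244527505219193);(-614647520588104705740177747212938083)];
 [(256412797391498771880618966585839196);(724707418970317548114827477045156826);(607864559839031221805676763224301590);(67016717548303109255175752722703790);(-72553220711909336316292500042280170)];
 [(20573258399064781746347043330636366);(57466170797505242739858491165956521);(47726131744014318311715440649266175);(5346657161193348308431436768125515);(-5486562184380509009772556045820505)];
 [(1027972309560569185690753064569728);(2842221819863749548311590829933880);(2337947037237768739561414722123432);(261117836109724387218267108540456);(-262579690824863989722309848218824)];
 [(29111326232926972887063192825216);(80060488987578735763880662735296);(65507996108628896541381075742272);(7279830186229477339372934579520);(-7279003167747656325190671252672)];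
 [(357271984146678126737757198336);(982497956403364848528832295424);(803861964330025785159953696256);(89317996036669531684439299584);(-89317996036669531684439299584)]])%Z.
Definition Phi2mT : tree := (SK (ST (SK (ST (Leaf 0) (Leaf 0)) (ST (Leaf 0) (Leaf 0))) (SK (ST (Leaf 0) (SK (ST (Leaf 0) (Leaf 0)) (ST (Leaf 0) (Leaf 2)))) (ST (Leaf 0) (SK (ST (Leaf 0) (Leaf 2)) (ST (Leaf 0) (Leaf 2)))))) (ST (SK (ST (Leaf 0) (Leaf 0)) (ST (Leaf 0) (Leaf 0))) (SK (ST (SK (Leaf 0) (Leaf 0)) (Leaf 2)) (ST (SK (Leaf 0) (ST (Leaf 0) (Leaf 0))) (Leaf 2))))).
Lemma Phi2m_chk : check [Phi2mZ; R1Z; R2Z] Phi2mT = true.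
Proof. vm_compute. reflexivity. Qed.
Lemma Phi2m_br : forall k V, k^2 - 1 <> 0 -> k^2-2 <> 0 -> 17*k^4-40*k^2+16 <> 0 -> k^2+2 <> 0 -> 1 + V <> 0 ->
  (1+V) * (Ff 2 (gK k) (zmK k) V (LK k V) - sK k * Gf 2 (gK k) (zmK k) V (LK k V)) * ((k^2-1)^3*(k^2-2)^2*((k^2+2)*(k^2-1))) * IZR 3200000000000000000000000000000000000000 = evalZ2 Phi2mZ (kap k) (tau V).
Proof. intros k V H1 H2 H3 H4 H5. unfold Ff, Gf, lam, a1, a2, a3, LK, V1K, gK, zmK, sK, kap, tau, evalZ2, evalZ1, Phi2mZ. cbn [fold_right]. field; auto. Qed.
Definition G2mZ : list (list Z) := ([[(-1330955564425914043729681378541);(1977669580411958847702937337871);(-821800347094408364944328832219);(94062136548056546933737562889)];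
 [(-1491822708472939246862016950622);(2871846543577480605941677342218);(-1325652959622857313100134951378);(157232876408623577281658520582)];
 [(-374420848753272024163608217641);(1262109739962329861429759326947);(-601266812326159719750570475263);(55557632446689940724341278549)];
 [(-94018868638653765314274606360);(261213582805488279829037230920);(-6318488271686586363960863400);(-36499185963169183039840003080)];
 [(-43866178804562800126843688490);(45489413999390741195720526990);(63988040975411428238418333210);(-33288413204933023112840783070)];
 [(-17521932115061165741157036468);(5113033878356316242497711548);(19516637837497473698870520468);(-8593805521215805416448650588)];
 [(-4151444076693163526759868906);(-1582472093684711565977090226);(2822100289284831474393864666);(-2447396918682152670374814)];
 [(-971399269815705824542226568);(-1271004594678068836284097704);(160904121746970299540431176);(480782683023650819979639912)];
 [(-215633653987604542134173865);(-353906811458717932434884445);(-17713316086104797187170175);(121944508014436425481478805)];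
 [(-31023443733506212347646110);(-50897424610536268869524790);(-4329196796900190648177810);(15545522469784576158905670)];
 [(-2522557954356601251784941);(-4028079367229689539633969);(-367927792979396851265499);(1137593718721434842015049)];
 [(-106371867908802881053872);(-167178206560323164953392);(-15208789205374326932688);(45597549446145956966832)];
 [(-1815544708552501367616);(-2852998827725359291968);(-259363529793214481088);(778090589379643443264)]])%Z.
Definition G2mT : tree := (SK (ST (SK (ST (Leaf 0) (Leaf 0)) (ST (Leaf 0) (Leaf 0))) (SK (ST (Leaf 0) (SK (Leaf 0) (ST (Leaf 0) (Leaf 2)))) (ST (Leaf 0) (SK (ST (Leaf 0) (Leaf 2)) (ST (Leaf 0) (Leaf 2)))))) (ST (SK (ST (Leaf 0) (Leaf 0)) (ST (Leaf 0) (Leaf 0))) (SK (ST (SK (Leaf 0) (ST (Leaf 0) (Leaf 0))) (Leaf 2)) (ST (SK (ST (Leaf 0) (Leaf 0)) (ST (Leaf 0) (SK (ST (Leaf 0) (Leaf 2)) (ST (Leaf 0) (Leaf 2))))) (Leaf 2))))).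
Lemma G2m_chk : check [G2mZ; R1Z; R2Z] G2mT = true.
Proof. vm_compute. reflexivity. Qed.
Lemma G2m_br : forall k V, k^2 - 1 <> 0 -> k^2-2 <> 0 -> 17*k^4-40*k^2+16 <> 0 -> k^2+2 <> 0 -> 1 + V <> 0 ->
  Gf 2 (gK k) (zmK k) V (LK k V) * ((k^2-1)^2*(k^2-2)*((k^2+2)*(k^2-1))) * IZR 16000000000000000000000000000 = evalZ2 G2mZ (kap k) (tau V).
Proof. intros k V H1 H2 H3 H4 H5. unfold Ff, Gf, lam, a1, a2, a3, LK, V1K, gK, zmK, sK, kap, tau, evalZ2, evalZ1, G2mZ. cbn [fold_right]. field; auto. Qed.
Definition Phi2hZ : list (list Z) := ([[(-286394077591974169057084953580491121133764);(-17580984873711464290885833760295726756613);(696039625647397305683955778250833075054521);(-507497840529515792926787896245586886441247);(92588412658578807091215346786607708192103)];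
 [(-779016776835998902176211012359349920570360);(-16316946487833626789291166968198377908450);(2090300661443663562728642417267012134689546);(-1583151423197533214940956207443554851047110);(306785581449743833288428899579012749167174)];
 [(-690234452770172033651114160435911843388060);(107823408869043544616461431991804802706009);(2325809911733476340667837508961725268806083);(-1856673022003286781715539424419745282075173);(387640874506835252783860210023776824392333)];
 [(-33614692609607909674244756341521880880448);(146277599051261158206205016002894108214292);(1042631226700548843717865266295479853379580);(-902797976002659407782536029265554571055620);(205679505990490913842628000318691846533460)];
 [(312189385858941284034602894883344207557692);(-71284959972371198410053516457216443826893);(-16399242897414469378950045344258872108575);(-18039719118251368006581500931958795528695);(900996150448668602184986420263631514015)];
 [(185321429730312716117371463669185725434904);(-209327697942951432282142649127419907824814);(-208068024644448804562902083173494599247738);(150235135048989482785224908075552493814806);(-50252586289001190487839898720399150978614)];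
 [(38947878795655342988273281886779517261892);(-124081800883008199638784784698624923357063);(-111722515704493925252455043125285033717533);(40732486738685052619486054261613492966715);(-20044357718240536572801880092843327746547)];
 [(7700824658143206678160439011555262473392);(-29600923054716574117100095008528087317280);(-48347852834691897235448989414004867539584);(-10390457969500164725674751986212600155616);(331844766004149935742311961888175874256)];
 [(4286616789967632334994805594593693051796);(-3148075308238825217529486397132747158759);(-17766267149251658126327132536881342182685);(-8144306639792972267581784522532542608485);(2257782765250654975012721373498483983805)];
 [(1461788633371007916236697347673374479416);(375614936287287925429650456817340442786);(-3588974058416345837656455901155782200650);(-1932553554554048659456626761971645142010);(574086116299450885534182153032747664570)];
 [(401227650351630205998810725835665849484);(650736566436813486495556136072394938067);(59214742678649727916012108140875647713);(-196690866246971249404088790836434450071);(-6566502467950032074428681596116258481)];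
 [(112873995172966067512856134676592153696);(294143435214814691044831569263948655876);(217863460822665749252032149068977506828);(3681446130034099843705089863257053900);(-32923600498639874037669339805603740828)];
 [(24181376432516600708204587306223447796);(68415344906174049773771068418591827833);(56193743614790328028296550482418132419);(3696711528858485282721106010307755451);(-8263072410229760666439182726937297411)];
 [(3326481033621470135975950034570218152);(9352403272154922760991651980511079342);(7635722130342912170866789451045492730);(515573245257988456568241692353322730);(-1094226648904588211496551106739162890)];
 [(284457262927398815356874656619858892);(785507592442146426127297769627926107);(629170713989957598886880331511023225);(39645279282895455674552002416888705);(-88475105192524616901037719815748585)];
 [(14703579691236889813957886513795376);(40061084760653933274681923278380360);(31617413143137155306969729397864504);(1865890445940087440801995036279512);(-4394017627780024405443697597000008)];
 [(422108027738827449256049321014272);(1142669244669499765086014639944512);(895271352270807024875639905550784);(50967081488424551517433175325120);(-123743053851710157528241411295424)];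
 [(5180443770126832837697479375872);(14022925377757116474456970034688);(10986113512510352397186033848832);(625225972256686721791075097088);(-1518405932623382038635468092928)]])%Z.
Definition Phi2hT : tree := (SK (ST (SK (ST (Leaf 0) (Leaf 0)) (ST (Leaf 0) (Leaf 0))) (SK (ST (SK (Leaf 0) (Leaf 0)) (SK (ST (Leaf 0) (Leaf 0)) (ST (Leaf 0) (Leaf 2)))) (ST (SK (Leaf 0) (Leaf 0)) (SK (ST (Leaf 0) (Leaf 2)) (ST (SK (Leaf 0) (Leaf 2)) (Leaf 2)))))) (ST (SK (ST (Leaf 0) (Leaf 0)) (ST (Leaf 0) (Leaf 0))) (SK (ST (SK (Leaf 0) (ST (Leaf 0) (Leaf 0))) (Leaf 2)) (ST (SK (ST (Leaf 0) (SK (ST (Leaf 0) (SK (Leaf 0) (ST (Leaf 0) (Leaf 2)))) (ST (Leaf 0) (SK (ST (Leaf 0) (Leaf 2)) (Leaf 2))))) (ST (Leaf 0) (SK (ST (Leaf 0) (Leaf 2)) (ST (SK (Leaf 0) (ST (Leaf 0) (SK (ST (Leaf 0) (Leaf 2)) (ST (Leaf 0) (Leaf 2))))) (Leaf 2))))) (Leaf 2))))).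
Lemma Phi2h_chk : check [Phi2hZ; R1Z; R2Z] Phi2hT = true.
Proof. vm_compute. reflexivity. Qed.
Lemma Phi2h_br : forall k V, k^2 - 1 <> 0 -> k^2-2 <> 0 -> 17*k^4-40*k^2+16 <> 0 -> k^2+2 <> 0 -> 1 + V <> 0 ->
  (1+V) * (Ff 2 (gK k) (zhK k) V (LK k V) - sK k * Gf 2 (gK k) (zhK k) V (LK k V)) * ((k^2-1)^3*(k^2-2)^2*(17*k^4-40*k^2+16)) * IZR 3200000000000000000000000000000000000000 = evalZ2 Phi2hZ (kap k) (tau V).
Proof. intros k V H1 H2 H3 H4 H5. unfold Ff, Gf, lam, a1, a2, a3, LK, V1K, gK, zhK, sK, kap, tau, evalZ2, evalZ1, Phi2hZ. cbn [fold_right]. field; auto. Qed.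
Definition G2hZ : list (list Z) := ([[(-6454172777527736714806273370677);(9630601316543107642658156440767);(-4009129156415238419600072239203);(459051084490950494658201199113)];
 [(-10581882234600337613966078122734);(19071706924886692945659767084106);(-8598236669585778804561669285666);(1011663546873386868044012049894)];
 [(-4665041484309580323536517673377);(12523006296386783086548645318339);(-6002565561020729490472885952151);(638351389196492228737972335333)];
 [(-396842223732607533110075368920);(3231006085593207374779785380040);(-1075649241680052984729483172200);(-93983931637252134509579652360)];
 [(-201376889808427849264241761530);(513033872347028909139016477230);(444490932201573838778345936970);(-269781979969126632861770012190)];
 [(-116625461324135068504565742996);(132181972711780888234773457596);(209973398680416322832018680116);(-110819333232767738661978819996)];
 [(-27895829845147820252040869082);(9489915934860735791191534158);(29701198076686960115278421802);(-11428337503961801105062571838)];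
 [(-7848506071054593005783082696);(-9649688937668661926186590248);(2117922035182221079127782152);(4182431153261534400142278504)];
 [(-2128149243681534584440357905);(-3321236701318758164215153965);(370105639872011877867694425);(1581193733415350967662489685)];
 [(-334456976285402694767114670);(-493435381642349902493875830);(77429795668907397882172830);(236417800091365839316596390)];
 [(-28147988777436121614921477);(-39191807993741222766253713);(7686889128794790455193837);(18730709629860555877135833)];
 [(-1200482509256489657607984);(-1626222940383721724342064);(349417909457249201702064);(775158340584481268436144)];
 [(-20489718853663944005952);(-27751897687873949476416);(5965361185243933065024);(13227540019453938535488)]])%Z.
Definition G2hT : tree := (SK (ST (SK (ST (Leaf 0) (Leaf 0)) (ST (Leaf 0) (Leaf 0))) (SK (ST (Leaf 0) (SK (ST (Leaf 0) (Leaf 0)) (ST (Leaf 0) (Leaf 2)))) (ST (SK (Leaf 0) (Leaf 0)) (SK (ST (Leaf 0) (Leaf 2)) (ST (SK (Leaf 0) (Leaf 2)) (Leaf 2)))))) (ST (SK (ST (Leaf 0) (Leaf 0)) (ST (Leaf 0) (Leaf 0))) (SK (ST (SK (ST (Leaf 0) (Leaf 0)) (ST (Leaf 0) (Leaf 0))) (Leaf 2)) (ST (SK (ST (Leaf 0) (SK (ST (Leaf 0) (SK (Leaf 0) (ST (Leaf 0) (Leaf 2)))) (ST (Leaf 0) (SK (ST (Leaf 0) (Leaf 2)) (Leaf 2))))) (ST (Leaf 0) (SK (ST (Leaf 0) (Leaf 2)) (ST (SK (Leaf 0) (ST (Leaf 0) (SK (ST (Leaf 0) (Leaf 2)) (ST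 (Leaf 0) (Leaf 2))))) (Leaf 2))))) (Leaf 2))))).
Lemma G2h_chk : check [G2hZ; R1Z; R2Z] G2hT = true.
Proof. vm_compute. reflexivity. Qed.
Lemma G2h_br : forall k V, k^2 - 1 <> 0 -> k^2-2 <> 0 -> 17*k^4-40*k^2+16 <> 0 -> k^2+2 <> 0 -> 1 + V <> 0 ->
  Gf 2 (gK k) (zhK k) V (LK k V) * ((k^2-1)^2*(k^2-2)*(17*k^4-40*k^2+16)) * IZR 16000000000000000000000000000 = evalZ2 G2hZ (kap k) (tau V).
Proof. intros k V H1 H2 H3 H4 H5. unfold Ff, Gf, lam, a1, a2, a3, LK, V1K, gK, zhK, sK, kap, tau, evalZ2, evalZ1, G2hZ. cbn [fold_right]. field; auto. Qed.
Definition HZ : list (list Z) := ([[(-46802786921942009)];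
 [(-1392180211180386)];
 [(40970462005588905)];
 [(5384384605391580)];
 [(-4161066609877335)];
 [(-1128734930118546)];
 [(-99149038965369)];
 [(-2928898896840)]])%Z.
Definition HT : tree := (Leaf 0).
Lemma H_chk : check [HZ; []; []] HT = true.
Proof. vm_compute. reflexivity. Qed.
Lemma H_br : forall k V, k^2 - 1 <> 0 -> 17*k^4-40*k^2+16 <> 0 ->
  - (k/(k^2-1) - 1/1000 - sK k * V1K k - 1 + (sK k - 1) * (-2*(5*k^4-14*k^2+8)/(17*k^4-40*k^2+16))) * ((k^2-1)*(17*k^4-40*k^2+16)) * IZR 2000000000000000 = evalZ2 HZ (kap k) (tau V).
Proof. intros k V H1 H3. unfold V1K, sK, kap, tau, evalZ2, evalZ1, HZ. cbn [fold_right]. field; auto. Qed.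


Lemma cont_of_deriv : forall f x l, derivable_pt_lim f x l ->
  forall eps, 0 < eps -> exists alp, 0 < alp /\ forall y, Rabs (y - x) < alp -> Rabs (f y - f x) < eps.
Proof.
  intros f x l H eps Heps.
  assert (Hc : continuity_pt f x) by (apply derivable_continuous_pt; exact (exist _ l H)).
  destruct (Hc eps Heps) as [alp [Ha Hy]].
  exists alp; split; [lra|]. intros y Hy'.
  destruct (Req_dec y x) as [->|Hne]. rewrite Rminus_diag, Rabs_R0; lra.
  apply (Hy y). split; [split; [exact I|auto]|exact Hy'].
Qed.

Lemma barrier : forall (C : R -> R) (a b c0 s : R),
  a < b ->
  (forall x, a < x < b -> exists dC, derivable_pt_lim C x dC /\ (C x = c0 + s * (x - a) -> s < dC)) ->
  (exists db, derivable_pt_lim C b db) ->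
  C b < c0 + s * (b - a) ->
  forall x, a < x <= b -> C x < c0 + s * (x - a).
Proof.
  intros C a b c0 s Hab Hd Hb Hend.
  set (h := fun y => c0 + s * (y - a) - C y).
  assert (Hcont : forall y, a < y <= b -> forall eps, 0 < eps -> exists alp, 0 < alp /\
             forall z, Rabs (z - y) < alp -> Rabs (h z - h y) < eps).
  { intros y Hy eps Heps.
    assert (Hder : exists l, derivable_pt_lim C y l).
    { destruct (Req_dec y b) as [->|Hne]; [exact Hb|].
      destruct (Hd y ltac:(lra)) as [l [Hl _]]. exists l; exact Hl. }
    destruct Hder as [l Hl].
    destruct (cont_of_deriv C y l Hl (eps/2) ltac:(lra)) as [a1 [Ha1 H1]].
    destruct (Req_dec s 0) as [Hs|Hs].
    - exists a1; split; [lra|]. intros z Hz. specialize (H1 z Hz). unfold h.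
      replace (c0 + s * (z - a) - C z - (c0 + s * (y - a) - C y)) with (- (C z - C y) + s * (z - y)) by ring.
      rewrite Hs, Rmult_0_l, Rplus_0_r, Rabs_Ropp. lra.
    - exists (Rmin a1 (eps / 2 / Rabs s)). split.
      + apply Rmin_glb_lt; [lra|]. apply Rdiv_lt_0_compat; [lra|]. apply Rabs_pos_lt; exact Hs.
      + intros z Hz. assert (Hz1 : Rabs (z - y) < a1) by (eapply Rlt_le_trans; [exact Hz|apply Rmin_l]).
        assert (Hz2 : Rabs (z - y) < eps / 2 / Rabs s) by (eapply Rlt_le_trans; [exact Hz|apply Rmin_r]).
        specialize (H1 z Hz1). unfold h.
        replace (c0 + s * (z - a) - C z - (c0 + s * (y - a) - C y)) with (- (C z - C y) + s * (z - y)) by ring.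
        eapply Rle_lt_trans. apply Rabs_triang. rewrite Rabs_Ropp, Rabs_mult.
        assert (Rabs s * Rabs (z - y) < eps / 2).
        { apply Rabs_pos_lt in Hs.
          apply (Rmult_lt_compat_l (Rabs s)) in Hz2; [|lra].
          replace (Rabs s * (eps / 2 / Rabs s)) with (eps/2) in Hz2 by (field; lra). lra. }
        lra. }
  intros x Hx.
  destruct (Rlt_or_le 0 (h x)) as [Hpos|Hneg]; [unfold h in Hpos; lra|].
  exfalso.
  assert (Hxb : x < b) by (destruct (Req_dec x b) as [->|]; [unfold h in Hneg; lra|lra]).
  set (E := fun y => x <= y <= b /\ h y <= 0).
  assert (HEb : bound E) by (exists b; intros y [Hy _]; lra).
  assert (HEx : exists y, E y) by (exists x; split; [lra|exact Hneg]).
  destruct (completeness E HEb HEx) as [sg [Hub Hlub]].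
  assert (Hxs : x <= sg) by (apply Hub; split; [lra|exact Hneg]).
  assert (Hsb : sg <= b) by (apply Hlub; intros y [Hy _]; lra).
  assert (Happrox : forall alp, 0 < alp -> exists y, E y /\ sg - alp < y <= sg).
  { intros alp Halp. apply Classical_Prop.NNPP. intros Hno.
    assert (sg <= sg - alp); [|lra].
    apply Hlub. intros y Ey. destruct (Rle_lt_dec y (sg - alp)) as [|Hlt]; [lra|].
    exfalso. apply Hno. exists y. split; [exact Ey|]. split; [lra|apply Hub; exact Ey]. }
  assert (Hh1 : h sg <= 0).
  { destruct (Rle_lt_dec (h sg) 0) as [|Hp]; [lra|].
    destruct (Hcont sg ltac:(lra) (h sg) Hp) as [alp [Halp Hal]].
    destruct (Happrox alp Halp) as [y [[_ Ey] Hy]].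
    assert (Rabs (y - sg) < alp) by (apply Rabs_def1; lra).
    specialize (Hal y H). apply Rabs_def2 in Hal. lra. }
  assert (Hsb' : sg < b).
  { destruct (Req_dec sg b) as [->|]; [|lra]. unfold h in Hh1; lra. }
  assert (Hright : forall y, sg < y <= b -> 0 < h y).
  { intros y Hy. destruct (Rlt_or_le 0 (h y)) as [|Hy']; [assumption|].
    assert (y <= sg) by (apply Hub; split; [lra|exact Hy']). lra. }
  assert (Hh0 : h sg = 0).
  { destruct (Req_dec (h sg) 0) as [|Hne]; [assumption|]. exfalso.
    assert (Hn : 0 < - h sg) by lra.
    destruct (Hcont sg ltac:(lra) (- h sg) Hn) as [alp [Halp Hal]].
    set (y := sg + Rmin (alp/2) ((b - sg)/2)).
    assert (Hy1 : 0 < Rmin (alp/2) ((b - sg)/2)) by (apply Rmin_glb_lt; lra).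
    assert (Hy2 : Rmin (alp/2) ((b - sg)/2) <= alp/2) by apply Rmin_l.
    assert (Hy3 : Rmin (alp/2) ((b - sg)/2) <= (b - sg)/2) by apply Rmin_r.
    assert (Rabs (y - sg) < alp) by (unfold y; apply Rabs_def1; lra).
    specialize (Hal y H). apply Rabs_def2 in Hal.
    specialize (Hright y ltac:(unfold y; lra)). lra. }
  destruct (Hd sg ltac:(lra)) as [dC [HdC Hcross]].
  assert (Hs : s < dC) by (apply Hcross; unfold h in Hh0; lra).
  assert (Hhd : derivable_pt_lim h sg (s - dC)).
  { unfold h. replace (s - dC) with ((0 + s * (1 - 0)) - dC) by ring.
    apply derivable_pt_lim_minus; [|exact HdC].
    apply derivable_pt_lim_plus. apply derivable_pt_lim_const.
    apply derivable_pt_lim_scal. apply derivable_pt_lim_minus.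
    apply derivable_pt_lim_id. apply derivable_pt_lim_const. }
  destruct (Hhd ((dC - s)/2) ltac:(lra)) as [del Hdel].
  set (t := Rmin (del/2) ((b - sg)/2)).
  assert (Ht1 : 0 < t) by (apply Rmin_glb_lt; [destruct del; simpl; lra|lra]).
  assert (Ht2 : t <= del/2) by apply Rmin_l.
  assert (Ht3 : t <= (b - sg)/2) by apply Rmin_r.
  assert (Htd : Rabs t < del) by (rewrite Rabs_pos_eq by lra; destruct del; simpl in *; lra).
  specialize (Hdel t ltac:(lra) Htd).
  rewrite Hh0, Rminus_0_r in Hdel. apply Rabs_def2 in Hdel.
  specialize (Hright (sg + t) ltac:(lra)).
  assert (h (sg + t) / t < 0) by lra.
  assert (h (sg + t) < 0).
  { apply (Rmult_lt_compat_r t) in H; [|lra].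
    replace (h (sg + t) / t * t) with (h (sg + t)) in H by (field; lra). lra. }
  lra.
Qed.

Lemma ball_R1 : forall x y (e : posreal), ball x e y -> Rabs (y - x) < e.
Proof. intros. unfold ball in H. simpl in H. unfold AbsRing_ball, abs, minus, plus, opp in H. simpl in H. exact H. Qed.
Lemma ball_R2 : forall x y (e : posreal), Rabs (y - x) < e -> ball x e y.
Proof. intros. unfold ball. simpl. unfold AbsRing_ball, abs, minus, plus, opp. simpl. exact H. Qed.

Lemma right_limit_le : forall (C : R -> R) (a b c0 s : R), a < b ->
  (forall x, a < x <= b -> C x < c0 + s * (x - a)) ->
  filterlim C (at_right a) (locally (C a)) -> C a <= c0.
Proof.
  intros C a b c0 s Hab Hlt Hlim.
  destruct (Rle_lt_dec (C a) c0) as [|Hgt]; [assumption|exfalso].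
  set (eps := mkposreal ((C a - c0)/2) ltac:(lra)).
  apply filterlim_locally with (eps := eps) in Hlim.
  destruct Hlim as [del Hdel].
  set (r := Rmin (Rmin (del/2) ((b - a)/2)) ((C a - c0) / 4 / (Rabs s + 1))).
  assert (Hr0 : 0 < r).
  { unfold r. apply Rmin_glb_lt; [apply Rmin_glb_lt|].
    - destruct del; simpl; lra.
    - lra.
    - apply Rdiv_lt_0_compat; [lra|]. pose proof (Rabs_pos s); lra. }
  assert (Hr1 : r <= del/2) by (unfold r; eapply Rle_trans; [apply Rmin_l|apply Rmin_l]).
  assert (Hr2 : r <= (b - a)/2) by (unfold r; eapply Rle_trans; [apply Rmin_l|apply Rmin_r]).
  assert (Hr3 : r <= (C a - c0) / 4 / (Rabs s + 1)) by (unfold r; apply Rmin_r).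
  assert (Hb1 : ball a del (a + r)).
  { apply ball_R2. replace (a + r - a) with r by ring. rewrite Rabs_pos_eq by lra.
    destruct del; simpl in *; lra. }
  specialize (Hdel (a + r) Hb1 ltac:(lra)). apply ball_R1 in Hdel. simpl in Hdel.
  apply Rabs_def2 in Hdel.
  specialize (Hlt (a + r) ltac:(lra)).
  replace (a + r - a) with r in Hlt by ring.
  assert (s * r <= Rabs s * r) by (apply Rmult_le_compat_r; [lra|apply Rle_abs]).
  assert (Rabs s * r <= (C a - c0) / 4).
  { assert (Habs : 0 <= Rabs s) by apply Rabs_pos.
    apply (Rmult_le_compat_l (Rabs s + 1)) in Hr3; [|lra].
    replace ((Rabs s + 1) * ((C a - c0) / 4 / (Rabs s + 1))) with ((C a - c0)/4) in Hr3 by (field; lra).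
    nra. }
  lra.
Qed.


Lemma zM_le : forall g, 2 <= g -> zM g <= (g+2)/((g+2)^2+8*g).
Proof.
  intros g Hg. unfold zM.
  pose proof (pow2_sqrt g ltac:(lra)) as Ha.
  pose proof (pow2_sqrt 2 ltac:(lra)) as Hb.
  pose proof (sqrt_pos g) as Ha0. pose proof (sqrt_pos 2) as Hb0.
  set (a := sqrt g) in *. set (b := sqrt 2) in *.
  assert (Hpos : 0 < ((g+2)^2+8*g)/(g+2)) by (apply Rdiv_lt_0_compat; nra).
  assert (Hkey : ((g+2)^2+8*g)/(g+2) <= (a+b)^2).
  { apply (Rmult_le_reg_r (g+2)); [lra|].
    replace (((g + 2) ^ 2 + 8 * g) / (g + 2) * (g + 2)) with ((g+2)^2+8*g) by (field; lra).
    rewrite <- Ha, <- Hb.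
    assert (0 <= 2*a*b*(a-b)^2) by (apply Rmult_le_pos; [nra|nra]).
    nra. }
  apply Rinv_le_contravar in Hkey; [|exact Hpos].
  replace (/ (((g + 2) ^ 2 + 8 * g) / (g + 2))) with ((g+2)/((g+2)^2+8*g)) in Hkey by (field; nra).
  exact Hkey.
Qed.

Lemma V6_le : forall g z zh, 2 <= g -> z <= zh -> V6pt g z <= (-1 + (g-2)*zh)/2.
Proof.
  intros g z zh Hg Hz. unfold V6pt, wz.
  pose proof (sqrt_pos (1 - 2 * (g + 2) * z + (g - 2) ^ 2 * z ^ 2)).
  assert ((g-2)*z <= (g-2)*zh) by (apply Rmult_le_compat_l; lra). lra.
Qed.

Lemma zm_pos : forall g, 2 <= g <= 3 -> 0 < zm g.
Proof. intros g Hg. unfold zm. apply Rdiv_lt_0_compat; nra. Qed.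

Lemma V1_le_V6 : forall g z, 2 <= g <= 3 -> zm g <= z -> V1pt g <= V6pt g z.
Proof.
  intros g z Hg Hz. pose proof (zm_pos g Hg).
  set (r := (g-2)*z + (3-g)/(g+1)).
  assert (Hr : 0 <= r).
  { unfold r. assert (0 <= (g-2)*z) by nra. assert (0 <= (3-g)/(g+1)) by (apply Rdiv_le_0_compat; lra). lra. }
  assert (Hd : 1 - 2 * (g + 2) * z + (g - 2) ^ 2 * z ^ 2 <= r^2).
  { assert (Hid : r^2 - (1 - 2 * (g + 2) * z + (g - 2) ^ 2 * z ^ 2) = 8*(2*g-1)/(g+1)*(z - zm g))
      by (unfold r, zm; field; split; nra).
    assert (0 <= 8*(2*g-1)/(g+1)*(z - zm g)).
    { apply Rmult_le_pos; [apply Rdiv_le_0_compat; lra|lra]. }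
    lra. }
  assert (Hw : wz g z <= r).
  { unfold wz. rewrite <- (sqrt_pow2 r Hr). apply sqrt_le_1_alt. exact Hd. }
  unfold V1pt, V6pt.
  assert (Hid2 : (-1 + (g - 2) * z - wz g z) / 2 - - 2 / (g + 1) = (r - wz g z)/2) by (unfold r; field; lra).
  lra.
Qed.


Definition VhK (k : R) := -2*(5*k^4-14*k^2+8)/(17*k^4-40*k^2+16).

Lemma k_exists : forall g, 2 <= g <= 3 -> exists k, 0 < k /\ 3 <= k^2 /\ k^2 <= 4 /\ g = gK k.
Proof.
  intros g Hg. exists (sqrt (2*g/(g-1))).
  assert (H0 : 0 <= 2*g/(g-1)) by (apply Rdiv_le_0_compat; lra).
  pose proof (pow2_sqrt _ H0) as Hs.
  assert (Hb1 : 3 <= 2*g/(g-1)).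
  { apply (Rmult_le_reg_r (g-1)); [lra|]. replace (2*g/(g-1)*(g-1)) with (2*g) by (field; lra). lra. }
  assert (Hb2 : 2*g/(g-1) <= 4).
  { apply (Rmult_le_reg_r (g-1)); [lra|]. replace (2*g/(g-1)*(g-1)) with (2*g) by (field; lra). lra. }
  split; [apply sqrt_lt_R0; lra|]. rewrite Hs. split; [lra|split; [lra|]].
  unfold gK. rewrite Hs.
  replace (2 * g / (g - 1) - 2) with (2/(g-1)) by (field; lra).
  field. lra.
Qed.

Lemma k_bounds : forall k, 0 < k -> 3 <= k^2 -> k^2 <= 4 -> 173/100 <= k <= 2.
Proof. intros k H0 H3 H4. split; nra. Qed.

Lemma C1_k : forall k, 0 < k -> 3 <= k^2 -> C1pt (gK k) = k/(k^2-1).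
Proof.
  intros k H0 H3. unfold C1pt, gK.
  replace (2 * (k ^ 2 / (k ^ 2 - 2)) * (k ^ 2 / (k ^ 2 - 2) - 1)) with ((2*k/(k^2-2))*(2*k/(k^2-2)))
    by (field; lra).
  rewrite sqrt_square by (apply Rdiv_le_0_compat; lra).
  field. split; lra.
Qed.

Lemma V1_k : forall k, 3 <= k^2 -> V1pt (gK k) = V1K k.
Proof. intros k H3. unfold V1pt, gK, V1K. field. split; lra. Qed.

Lemma zm_k : forall k, 3 <= k^2 -> zm (gK k) = zmK k.
Proof. intros k H3. unfold zm, gK, zmK. field. repeat split; nra. Qed.

Lemma zM_k : forall k, 3 <= k^2 -> k^2 <= 4 -> zM (gK k) <= zhK k.
Proof.
  intros k H3 H4. eapply Rle_trans. apply zM_le.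
  - unfold gK. apply (Rmult_le_reg_r (k^2-2)); [lra|]. unfold Rdiv. rewrite Rmult_assoc, Rinv_l by lra. lra.
  - unfold gK, zhK. right. field. repeat split; nra.
Qed.

Lemma V6_k : forall k z, 3 <= k^2 -> k^2 <= 4 -> z <= zhK k -> V6pt (gK k) z <= VhK k.
Proof.
  intros k z H3 H4 Hz. eapply Rle_trans. apply (V6_le _ _ (zhK k)).
  - unfold gK. apply (Rmult_le_reg_r (k^2-2)); [lra|]. unfold Rdiv. rewrite Rmult_assoc, Rinv_l by lra. lra.
  - exact Hz.
  - unfold gK, zhK, VhK. right. field. repeat split; nra.
Qed.

Lemma neg_of_prod : forall X A B e, X * A * B = e -> e < 0 -> 0 < A -> 0 < B -> X < 0.
Proof.
  intros X A B e H He HA HB. destruct (Rlt_or_le X 0) as [|HX]; [assumption|].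
  assert (0 <= X * A * B) by (apply Rmult_le_pos; [apply Rmult_le_pos; lra|lra]). lra.
Qed.

Lemma IZR_pos_lit : forall p, 0 < IZR (Zpos p).
Proof. intros. apply IZR_lt. reflexivity. Qed.

Lemma box_use : forall A tr k V,
  check [A; R1Z; R2Z] tr = true ->
  173/100 <= k <= 2 -> -7/10 <= V <= -4/10 ->
  0 <= (k^2-2) + V*(k^2-1) -> 0 <= -2*(5*k^4-14*k^2+8) - V*(17*k^4-40*k^2+16) ->
  evalZ2 A (kap k) (tau V) < 0.
Proof.
  intros A tr k V Hc Hk HV H1 H2.
  apply (check3_ok A R1Z R2Z tr Hc); try (unfold kap, tau; lra).
  - rewrite R1_br. apply Rmult_le_pos; [left; apply IZR_pos_lit|exact H1].
  - rewrite R2_br. apply Rmult_le_pos; [left; apply IZR_pos_lit|exact H2].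
Qed.

Lemma aff_neg : forall (f : R -> R) z1 z2 z, (forall z, f z = f 0 + z * (f 1 - f 0)) ->
  f z1 < 0 -> f z2 < 0 -> z1 <= z <= z2 -> f z < 0.
Proof.
  intros f z1 z2 z Hf H1 H2 Hz. rewrite Hf in H1, H2 |- *.
  destruct (Rle_lt_dec 0 (f 1 - f 0)).
  - assert (z * (f 1 - f 0) <= z2 * (f 1 - f 0)) by (apply Rmult_le_compat_r; lra). lra.
  - assert (z * (f 1 - f 0) <= z1 * (f 1 - f 0)) by nra. lra.
Qed.

Lemma Ff_aff : forall mr g V C, 1 + V <> 0 -> forall z,
  Ff mr g z V C = Ff mr g 0 V C + z * (Ff mr g 1 V C - Ff mr g 0 V C).
Proof. intros. unfold Ff, a1, a2, a3. field. auto. Qed.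
Lemma Gf_aff : forall mr g V C z,
  Gf mr g z V C = Gf mr g 0 V C + z * (Gf mr g 1 V C - Gf mr g 0 V C).
Proof. intros. unfold Gf, lam. ring. Qed.

Lemma combine : forall mr k V z, 1 + V <> 0 -> zmK k <= z <= zhK k ->
  Ff mr (gK k) (zmK k) V (LK k V) - sK k * Gf mr (gK k) (zmK k) V (LK k V) < 0 ->
  Ff mr (gK k) (zhK k) V (LK k V) - sK k * Gf mr (gK k) (zhK k) V (LK k V) < 0 ->
  Gf mr (gK k) (zmK k) V (LK k V) < 0 -> Gf mr (gK k) (zhK k) V (LK k V) < 0 ->
  Gf mr (gK k) z V (LK k V) < 0 /\
  sK k < Ff mr (gK k) z V (LK k V) / Gf mr (gK k) z V (LK k V).
Proof.
  intros mr k V z HV Hz H1 H2 H3 H4.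
  assert (HG : Gf mr (gK k) z V (LK k V) < 0).
  { apply (aff_neg (fun z => Gf mr (gK k) z V (LK k V)) (zmK k) (zhK k)); auto.
    intros; apply Gf_aff. }
  assert (HF : Ff mr (gK k) z V (LK k V) - sK k * Gf mr (gK k) z V (LK k V) < 0).
  { apply (aff_neg (fun z => Ff mr (gK k) z V (LK k V) - sK k * Gf mr (gK k) z V (LK k V)) (zmK k) (zhK k)); auto.
    intros z'. rewrite (Ff_aff mr (gK k) V (LK k V) HV z'), (Gf_aff mr (gK k) V (LK k V) z'). ring. }
  split; [exact HG|].
  apply (Rmult_lt_reg_r (- Gf mr (gK k) z V (LK k V))); [lra|].
  replace (Ff mr (gK k) z V (LK k V) / Gf mr (gK k) z V (LK k V) * - Gf mr (gK k) z V (LK k V))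
    with (- Ff mr (gK k) z V (LK k V)) by (field; lra).
  lra.
Qed.

Lemma region_facts : forall k V, 0 < k -> 3 <= k^2 -> k^2 <= 4 -> V1K k <= V <= VhK k ->
  173/100 <= k <= 2 /\ -7/10 <= V <= -4/10 /\ 0 <= (k^2-2) + V*(k^2-1) /\
  0 <= -2*(5*k^4-14*k^2+8) - V*(17*k^4-40*k^2+16) /\ 0 < 1 + V.
Proof.
  intros k V H0 H3 H4 [HV1 HV2].
  pose proof (k_bounds k H0 H3 H4) as Hk.
  assert (HQ : 0 < 17*k^4-40*k^2+16) by nra.
  assert (HA : V1K k * (k^2-1) = -(k^2-2)) by (unfold V1K; field; lra).
  assert (HB : VhK k * (17*k^4-40*k^2+16) = -2*(5*k^4-14*k^2+8)) by (unfold VhK; field; lra).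
  assert (HV1' : V1K k * (k^2-1) <= V * (k^2-1)) by (apply Rmult_le_compat_r; lra).
  assert (HV2' : V * (17*k^4-40*k^2+16) <= VhK k * (17*k^4-40*k^2+16)) by (apply Rmult_le_compat_r; lra).
  assert (HV1'' : -7/10 <= V) by nra.
  assert (HV2'' : V <= -4/10) by nra.
  repeat split; try lra.
Qed.

Lemma from_prod1 : forall Y S M L e, Y * S * M * L = e -> e < 0 -> 0 < Y -> 0 < M -> 0 < L -> S < 0.
Proof.
  intros Y S M L e H He HY HM HL.
  assert (Y * S < 0) by (apply (neg_of_prod _ M L e); auto).
  destruct (Rlt_or_le S 0); [assumption|]. assert (0 <= Y * S) by (apply Rmult_le_pos; lra). lra.
Qed.

Ltac posit := repeat first [ apply Rmult_lt_0_compat | apply pow_lt | apply IZR_pos_lit ]; try nra.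

Lemma ends_all : forall k V, 0 < k -> 3 <= k^2 -> k^2 <= 4 -> V1K k <= V <= VhK k ->
  (Ff 1 (gK k) (zmK k) V (LK k V) - sK k * Gf 1 (gK k) (zmK k) V (LK k V) < 0 /\
   Ff 1 (gK k) (zhK k) V (LK k V) - sK k * Gf 1 (gK k) (zhK k) V (LK k V) < 0 /\
   Gf 1 (gK k) (zmK k) V (LK k V) < 0 /\ Gf 1 (gK k) (zhK k) V (LK k V) < 0) /\
  (Ff 2 (gK k) (zmK k) V (LK k V) - sK k * Gf 2 (gK k) (zmK k) V (LK k V) < 0 /\
   Ff 2 (gK k) (zhK k) V (LK k V) - sK k * Gf 2 (gK k) (zhK k) V (LK k V) < 0 /\
   Gf 2 (gK k) (zmK k) V (LK k V) < 0 /\ Gf 2 (gK k) (zhK k) V (LK k V) < 0).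
Proof.
  intros k V H0 H3 H4 HV.
  destruct (region_facts k V H0 H3 H4 HV) as [Hk [HVb [HR1 [HR2 HY]]]].
  assert (HD : 0 < k^2-1) by lra. assert (HE : 0 < k^2-2) by lra.
  assert (HQ : 0 < 17*k^4-40*k^2+16) by nra. assert (HP : 0 < k^2+2) by lra.
  assert (HD' : k^2-1 <> 0) by lra. assert (HE' : k^2-2 <> 0) by lra.
  assert (HQ' : 17*k^4-40*k^2+16 <> 0) by lra. assert (HP' : k^2+2 <> 0) by lra.
  assert (HY' : 1 + V <> 0) by lra.
  pose proof (box_use _ _ k V Phi1m_chk Hk HVb HR1 HR2) as A1.
  pose proof (box_use _ _ k V Phi1h_chk Hk HVb HR1 HR2) as A2.
  pose proof (box_use _ _ k V G1m_chk Hk HVb HR1 HR2) as A3.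
  pose proof (box_use _ _ k V G1h_chk Hk HVb HR1 HR2) as A4.
  pose proof (box_use _ _ k V Phi2m_chk Hk HVb HR1 HR2) as A5.
  pose proof (box_use _ _ k V Phi2h_chk Hk HVb HR1 HR2) as A6.
  pose proof (box_use _ _ k V G2m_chk Hk HVb HR1 HR2) as A7.
  pose proof (box_use _ _ k V G2h_chk Hk HVb HR1 HR2) as A8.
  split; repeat split.
  - eapply from_prod1; [apply Phi1m_br; auto|exact A1|lra|posit|posit].
  - eapply from_prod1; [apply Phi1h_br; auto|exact A2|lra|posit|posit].
  - eapply neg_of_prod; [apply G1m_br; auto|exact A3|posit|posit].
  - eapply neg_of_prod; [apply G1h_br; auto|exact A4|posit|posit].
  - eapply from_prod1; [apply Phi2m_br; auto|exact A5|lra|posit|posit].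
  - eapply from_prod1; [apply Phi2h_br; auto|exact A6|lra|posit|posit].
  - eapply neg_of_prod; [apply G2m_br; auto|exact A7|posit|posit].
  - eapply neg_of_prod; [apply G2h_br; auto|exact A8|posit|posit].
Qed.

Lemma height : forall k V6, 0 < k -> 3 <= k^2 -> k^2 <= 4 -> V6 <= VhK k -> 1 + V6 < LK k V6.
Proof.
  intros k V6 H0 H3 H4 HV.
  pose proof (k_bounds k H0 H3 H4) as Hk.
  assert (HQ : 0 < 17*k^4-40*k^2+16) by nra.
  assert (Hc : evalZ2 HZ (kap k) (tau (-1/2)) < 0).
  { apply (check3_ok HZ [] [] HT H_chk); try (unfold kap, tau; lra); unfold evalZ2; simpl; lra. }
  rewrite <- H_br in Hc by lra.
  assert (Hpos : 0 < k/(k^2-1) - 1/1000 - sK k * V1K k - 1 + (sK k - 1) * (-2*(5*k^4-14*k^2+8)/(17*k^4-40*k^2+16))).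
  { assert (HX : - (k/(k^2-1) - 1/1000 - sK k * V1K k - 1 + (sK k - 1) * (-2*(5*k^4-14*k^2+8)/(17*k^4-40*k^2+16))) < 0).
    { eapply neg_of_prod; [reflexivity|exact Hc|posit|apply IZR_pos_lit]. }
    lra. }
  assert (Hs : sK k - 1 < 0) by (unfold sK; lra).
  assert (Hprod : 0 <= (sK k - 1) * (V6 - VhK k)) by nra.
  unfold LK. unfold VhK in Hprod. lra.
Qed.

Theorem mainTheorem11 :
  forall (m : nat) (gamma z : R),
    (m = 1%nat \/ m = 2%nat) ->
    2 <= gamma <= 3 ->
    zm gamma <= z < zM gamma ->
    forall C : R -> R,
      sol_P6 (INR m) gamma z C ->
      C (V1pt gamma) <> C1pt gamma.
Proof.
  intros m gamma z Hm Hg [Hz1 Hz2] C Hsol.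
  pose proof (V1_le_V6 gamma z Hg Hz1) as H16.
  pose proof (zm_pos gamma Hg) as Hzm0.
  destruct (k_exists gamma Hg) as [k [H0 [H3 [H4 ->]]]].
  pose proof (k_bounds k H0 H3 H4) as Hk.
  rewrite zm_k in Hz1 by lra.
  pose proof (zM_k k H3 H4) as HzM.
  assert (Hzh : z <= zhK k) by lra.
  pose proof (V6_k k z H3 H4 Hzh) as H6h.
  rewrite V1_k in H16 |- * by lra. rewrite C1_k by lra.
  destruct Hsol as [_ [HC6 [[c [_ Hc]] [Hode [Hlim _]]]]].
  rewrite V1_k in Hode, Hlim by lra.
  set (V6 := V6pt (gK k) z) in *.
  pose proof (height k V6 H0 H3 H4 H6h) as Hh.
  unfold C6pt in HC6. fold V6 in HC6.
  assert (Hlt : C (V1K k) < k/(k^2-1)).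
  { destruct (Req_dec (V1K k) V6) as [Heq|Hne].
    - rewrite Heq, HC6. unfold LK in Hh. rewrite <- Heq in Hh.
      replace (V1K k - V1K k) with 0 in Hh by ring. lra.
    - assert (Hab : V1K k < V6) by lra.
      assert (Hbar : forall x, V1K k < x <= V6 -> C x < (k/(k^2-1) - 1/1000) + sK k * (x - V1K k)).
      { apply (barrier C (V1K k) V6 _ (sK k) Hab).
        - intros x Hx. destruct (Hode x Hx) as [HGne Hder].
          exists (Ff (INR m) (gK k) z x (C x) / Gf (INR m) (gK k) z x (C x)).
          split; [apply is_derive_Reals; exact Hder|].
          intros HCx. change (k / (k ^ 2 - 1) - 1 / 1000 + sK k * (x - V1K k)) with (LK k x) in HCx.
          rewrite HCx.
          assert (Hreg : V1K k <= x <= VhK k) by lra.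
          destruct (ends_all k x H0 H3 H4 Hreg) as [E1 E2].
          assert (Hx1 : 1 + x <> 0) by (destruct (region_facts k x H0 H3 H4 Hreg) as [_ [_ [_ [_ Hy]]]]; lra).
          destruct Hm as [-> | ->].
          + replace (INR 1) with 1 by (simpl; ring).
            destruct E1 as [F1 [F2 [F3 F4]]].
            exact (proj2 (combine 1 k x z Hx1 ltac:(lra) F1 F2 F3 F4)).
          + replace (INR 2) with 2 by (simpl; ring).
            destruct E2 as [F1 [F2 [F3 F4]]].
            exact (proj2 (combine 2 k x z Hx1 ltac:(lra) F1 F2 F3 F4)).
        - exists c. apply is_derive_Reals. exact Hc.
        - rewrite HC6. unfold LK in Hh. exact Hh. }
      pose proof (right_limit_le C (V1K k) V6 _ (sK k) Hab Hbar Hlim). lra. }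
  lra.
Qed.
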